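(* Fix $\beta\ge1$ and let $\{X_i\}_{i\ge1}$, $W_n$, $\xi$, $\mathcal H$ and $\alpha$ be as in the context, with $\sup_{i\ge1}\mathbb E[|X_i|^{2+\alpha}]<\infty$. Fix $f\in\mathcal H$ and let $\xi_k:=f(W_k)-\mathbb E[f(W_k)]$ and $Z_l:=\sum_{4^{l-1}\le i<4^l}\frac{\xi_i}{i}$. Then there exists a positive constant $M_5$ such that for all $1\le n_1\le n_2$, $$\sum_{l=n_1}^{n_2}\mathbb E[Z_l^2]\le M_5\,(n_2-n_1+1).$$
   Context: Sub-linear expectation space $(\Omega,\mathscr H,\mathbb E)$: $(\Omega,\mathcal F)$ a measurable space, $\mathscr H$ a linear space of real measurable functions closed under $(X_1,\dots,X_n)\mapsto\varphi(X_1,\dots,X_n)$ for $\varphi\in C_{b,Lip}(\mathbb R^n)$ (bounded Lipschitz functions), and $\mathbb E:\mathscr H\to\mathbb R$ monotone, constant preserving, sub-additive and positively homogeneous; it is assumed $\mathbb E[X]=\sup_{P\in\mathcal P}E_P[X]$ for a family $\mathcal P$ of $\sigma$-additive probability measures. $(\widetilde\Omega,\widetilde{\mathscr H},\widetilde{\mathbb E})$ is another sub-linear expectation space. Both satisfy condition (A): for every $X$ and every sequence $f_n\in C_{b,Lip}(\mathbb R)$ with $f_n\downarrow0$, $\mathbb E[f_n(X)]\downarrow0$ (resp. $\widetilde{\mathbb E}[f_n(X)]\downarrow0$). Independence: $Y\in\mathscr H^n$ is independent of $X\in\mathscr H^m$ if $\mathbb E[\varphi(X,Y)]=\mathbb E\big[\mathbb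 E[\varphi(x,Y)]|_{x=X}\big]$ for all $\varphi\in C_{b,Lip}(\mathbb R^{m+n})$; $\{X_n\}$ is independent if $X_{n+1}$ is independent of $(X_1,\dots,X_n)$ for every $n$. Standing setting: $\{X_i\}$ is independent in $(\Omega,\mathscr H,\mathbb E)$ with $\mathbb E[X_i]=\mathbb E[-X_i]=0$, $\overline\sigma_i=\sqrt{\mathbb E[X_i^2]}$, $\underline\sigma_i=\sqrt{-\mathbb E[-X_i^2]}$, $\overline\sigma_i/\underline\sigma_i=\beta$ for all $i$, $0<\inf_i\underline\sigma_i^2\le\sup_i\overline\sigma_i^2<\infty$; $S_n=\sum_{i\le n}X_i$, $\sigma_i=(\underline\sigma_i+\overline\sigma_i)/2$, $B_n=\sqrt{\sum_{i\le n}\sigma_i^2}$, $W_n=S_n/B_n$. $\xi$ is $G$-normal under $\widetilde{\mathbb E}$ (for each $f\in C_{b,Lip}(\mathbb R)$, $u(t,x)=\widetilde{\mathbb E}[f(x+\sqrt t\xi)]$ is the unique viscosity solution of $\partial_tu-G(\partial_{xx}u)=0$, $u(0,\cdot)=f$, with $G(a)=\frac12\widetilde{\mathbb E}[a\xi^2]$), with $\sqrt{\widetilde{\mathbb E}[\xi^2]}=\frac{2\beta}{1+\beta}$, $\sqrt{-\widetilde{\mathbb E}[-\xi^2]}=\frac{2}{1+\beta}$. $\mathcal H:=\{f\in C_{b,Lip}(\mathbb R):\widetilde{\mathbb E}[f(\xi)]=-\widetilde{\mathbb E}[-f(\xi)]\}$. $\alpha\in(0,1)$ is the constant from Song's theorem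 (cited): there exist $\alpha\in(0,1)$ depending on $\beta$ and $C_{\alpha,\beta}>0$ such that for every such sequence and every $n$, $\sup_{|f|_{Lip}\le1}|\mathbb E[f(W_n)]-\widetilde{\mathbb E}[f(\xi)]|\le C_{\alpha,\beta}\sup_{1\le i\le n}\{\frac{\mathbb E[|X_i|^{2+\alpha}]}{\sigma_i^{2+\alpha}}(\frac{\sigma_i}{B_n})^\alpha\}$. *)

(* Defs.v *)
From HB Require Import structures.
From mathcomp Require Import all_boot all_order all_algebra.
From mathcomp Require Import all_classical all_reals all_analysis.
Set Implicit Arguments. Unset Strict Implicit. Unset Printing Implicit Defensive.
Import Order.TTheory GRing.Theory Num.Theory.
Import numFieldNormedType.Exports.
Local Open Scope classical_set_scope.
Local Open Scope ring_scope.

Section SubLinear.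
Context {R : realType}.

Definition bounded_fun {T : Type} (g : T -> R) : Prop :=
  exists M : R, forall x, `|g x| <= M.

(* C_{b,Lip}(R^I) for a finite index type I (R^n = 'I_n -> R), l^1 distance *)
Definition Cb_Lip {I : finType} (phi : (I -> R) -> R) : Prop :=
  bounded_fun phi /\
  exists L : R, forall x y, `|phi x - phi y| <= L * \sum_(i : I) `|x i - y i|.

Definition Cb_Lip1 (g : R -> R) : Prop :=
  bounded_fun g /\ exists L : R, forall x y, `|g x - g y| <= L * `|x - y|.

Definition tup {I : Type} {Om : Type} (X : I -> Om -> R) (w : Om) : I -> R :=
  fun i => X i w.

(* (X_1,...,X_m,Y_1,...,Y_n) as a point of R^(m+n) *)
Definition join {m n : nat} (a : 'I_m -> R) (b : 'I_n -> R) : 'I_m + 'I_n -> R :=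
  fun s => match s with inl i => a i | inr j => b j end.

(* ---------- sub-linear expectation space (Omega, H, E) ----------
   E is given as a total map on Omega -> R, only its values on H matter. *)
Record is_sublinear_expectation {d} {Om : measurableType d}
    (H : set (Om -> R)) (E : (Om -> R) -> R) : Prop := {
  sle_meas : forall X, H X -> measurable_fun setT X;
  sle_zero : H (fun _ => 0);
  sle_add : forall X Y, H X -> H Y -> H (fun w => X w + Y w);
  sle_scale : forall (c : R) X, H X -> H (fun w => c * X w);
  sle_comp : forall (n : nat) (X : 'I_n -> Om -> R) (phi : ('I_n -> R) -> R),
      (forall i, H (X i)) -> Cb_Lip phi -> H (fun w => phi (tup X w));
  sle_mono : forall X Y, H X -> H Y -> (forall w, X w <= Y w) -> E X <= E Y;
  sle_const : forall c : R, E (fun _ => c) = c;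
  sle_subadd : forall X Y, H X -> H Y -> E (fun w => X w + Y w) <= E X + E Y;
  sle_poshom : forall (l : R) X, 0 <= l -> H X -> E (fun w => l * X w) = l * E X;
  sle_repr : exists Ps : set (probability Om R),
      forall X, H X ->
        (forall P, Ps P -> P.-integrable setT (EFin \o X)) /\
        ((E X)%:E = ereal_sup [set ('E_P[X])%E | P in Ps])
}.

Definition condition_A {Om : Type} (H : set (Om -> R)) (E : (Om -> R) -> R) : Prop :=
  forall X, H X -> forall f : nat -> R -> R,
    (forall k, Cb_Lip1 (f k)) ->
    (forall x k, f k.+1 x <= f k x) ->
    (forall x, (fun k => f k x) @ \oo --> (0 : R)) ->
    (forall k, E (fun w => f k.+1 (X w)) <= E (fun w => f k (X w))) /\
    (fun k => E (fun w => f k (X w))) @ \oo --> (0 : R).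

Definition indep {Om : Type} (E : (Om -> R) -> R) {m n : nat}
    (Y : 'I_n -> Om -> R) (X : 'I_m -> Om -> R) : Prop :=
  forall phi : ('I_m + 'I_n -> R) -> R, Cb_Lip phi ->
    E (fun w => phi (join (tup X w) (tup Y w))) =
    E (fun w => E (fun w' => phi (join (tup X w) (tup Y w')))).

(* {X_i}_{i>=1} independent: X_{n+1} independent of (X_1,...,X_n) *)
Definition indep_seq {Om : Type} (E : (Om -> R) -> R) (X : nat -> Om -> R) : Prop :=
  forall n : nat, indep E (fun _ : 'I_1 => X n.+1) (fun i : 'I_n => X i.+1).

Definition sig_up {Om : Type} (E : (Om -> R) -> R) (X : nat -> Om -> R) (i : nat) : R :=
  Num.sqrt (E (fun w => X i w ^+ 2)).
Definition sig_lo {Om : Type} (E : (Om -> R) -> R) (X : nat -> Om -> R) (i : nat) : R :=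
  Num.sqrt (- E (fun w => - X i w ^+ 2)).
Definition sig {Om : Type} (E : (Om -> R) -> R) (X : nat -> Om -> R) (i : nat) : R :=
  (sig_lo E X i + sig_up E X i) / 2.
Definition Bn {Om : Type} (E : (Om -> R) -> R) (X : nat -> Om -> R) (n : nat) : R :=
  Num.sqrt (\sum_(1 <= i < n.+1) sig E X i ^+ 2).
Definition Sn {Om : Type} (X : nat -> Om -> R) (n : nat) (w : Om) : R :=
  \sum_(1 <= i < n.+1) X i w.
Definition Wn {Om : Type} (E : (Om -> R) -> R) (X : nat -> Om -> R) (n : nat) (w : Om) : R :=
  Sn X n w / Bn E X n.

Definition standing_setting {Om : Type} (H : set (Om -> R)) (E : (Om -> R) -> R)
    (beta : R) (X : nat -> Om -> R) : Prop :=
  indep_seq E X /\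
  (forall i, (1 <= i)%N ->
     H (X i) /\ H (fun w => X i w ^+ 2) /\
     E (X i) = 0 /\ E (fun w => - X i w) = 0 /\
     sig_up E X i / sig_lo E X i = beta) /\
  (exists c C : R, 0 < c /\
     forall i, (1 <= i)%N -> c <= sig_lo E X i ^+ 2 /\ sig_up E X i ^+ 2 <= C).

Definition Gfun {Om : Type} (E : (Om -> R) -> R) (xi : Om -> R) (a : R) : R :=
  1 / 2 * E (fun w => a * xi w ^+ 2).

Definition d_t (phi : R -> R -> R) (t x : R) : R := derive1 (fun s => phi s x) t.
Definition d_x (phi : R -> R -> R) (t x : R) : R := derive1 (fun y => phi t y) x.
Definition d_xx (phi : R -> R -> R) (t x : R) : R := derive1 (fun y => d_x phi t y) x.

Definition test_fun (phi : R -> R -> R) : Prop :=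
  (forall t x, derivable (fun s => phi s x) t 1) /\
  (forall t x, derivable (fun y => phi t y) x 1) /\
  (forall t x, derivable (fun y => d_x phi t y) x 1) /\
  continuous (fun p : R * R => phi p.1 p.2) /\
  continuous (fun p : R * R => d_t phi p.1 p.2) /\
  continuous (fun p : R * R => d_x phi p.1 p.2) /\
  continuous (fun p : R * R => d_xx phi p.1 p.2).

Definition visc_sub (G : R -> R) (u : R -> R -> R) : Prop :=
  forall t x, 0 < t -> forall phi, test_fun phi ->
    (forall s y, 0 < s -> u s y <= phi s y) -> u t x = phi t x ->
    d_t phi t x - G (d_xx phi t x) <= 0.
Definition visc_super (G : R -> R) (u : R -> R -> R) : Prop :=
  forall t x, 0 < t -> forall phi, test_fun phi ->
    (forall s y, 0 < s -> phi s y <= u s y) -> u t x = phi t x ->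
    d_t phi t x - G (d_xx phi t x) >= 0.
Definition visc_solution (G : R -> R) (g : R -> R) (u : R -> R -> R) : Prop :=
  {within [set p : R * R | 0 <= p.1], continuous (fun p : R * R => u p.1 p.2)} /\
  visc_sub G u /\ visc_super G u /\ (forall x, u 0 x = g x).

Definition G_normal {Om : Type} (H : set (Om -> R)) (E : (Om -> R) -> R)
    (xi : Om -> R) : Prop :=
  H xi /\ H (fun w => xi w ^+ 2) /\
  forall g, Cb_Lip1 g ->
    visc_solution (Gfun E xi) g (fun t x => E (fun w => g (x + Num.sqrt t * xi w))).

Definition calH {Om : Type} (E : (Om -> R) -> R) (xi : Om -> R) (g : R -> R) : Prop :=
  Cb_Lip1 g /\ E (fun w => g (xi w)) = - E (fun w => - g (xi w)).

Definition song_alpha {d'} {Om' : measurableType d'} (beta : R)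
    (E' : (Om' -> R) -> R) (xi : Om' -> R) (alpha : R) : Prop :=
  0 < alpha < 1 /\
  exists C : R, 0 < C /\
    forall (d : measure_display) (Om : measurableType d) (H : set (Om -> R))
           (E : (Om -> R) -> R) (X : nat -> Om -> R),
      is_sublinear_expectation H E -> condition_A H E ->
      standing_setting H E beta X ->
      (forall i, (1 <= i)%N -> H (fun w => `|X i w| `^ (2 + alpha))) ->
      forall n, (1 <= n)%N ->
      forall g : R -> R, bounded_fun g -> (forall x y, `|g x - g y| <= `|x - y|) ->
        `| E (fun w => g (Wn E X n w)) - E' (fun w => g (xi w)) | <=
        C * \big[Order.max/0]_(1 <= i < n.+1)
              (E (fun w => `|X i w| `^ (2 + alpha)) / sig E X i `^ (2 + alpha)
               * (sig E X i / Bn E X n) `^ alpha).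

Definition xik {Om : Type} (E : (Om -> R) -> R) (X : nat -> Om -> R) (f : R -> R)
    (k : nat) (w : Om) : R :=
  f (Wn E X k w) - E (fun w' => f (Wn E X k w')).
Definition Zl {Om : Type} (E : (Om -> R) -> R) (X : nat -> Om -> R) (f : R -> R)
    (l : nat) (w : Om) : R :=
  \sum_(4 ^ (l.-1) <= i < 4 ^ l) xik E X f i w / i%:R.

End SubLinear.

(* Main.v *)
Require Import Defs.
From HB Require Import structures.
From mathcomp Require Import all_boot all_order all_algebra.
From mathcomp Require Import all_classical all_reals all_analysis.
From mathcomp Require Import lra.
Import Order.TTheory GRing.Theory Num.Theory.
Local Open Scope ring_scope.
Set Implicit Arguments.
Section Helpers.
Variables (R : realType) (d : measure_display) (Om : measurableType d)
  (H : set (Om -> R)) (E : (Om -> R) -> R).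
Hypothesis hE : is_sublinear_expectation H E.

Lemma H_const (c : R) : H (fun _ => c).
Proof.
have := @sle_comp _ _ _ _ _ hE 0 (fun _ => fun _ => 0) (fun _ => c).
apply; first by case.
split; first by exists `|c| => _.
by exists 0 => x y; rewrite subrr normr0 mul0r.
Qed.

Lemma H_comp1 {Y : Om -> R} {g : R -> R} : H Y -> Cb_Lip1 g -> H (fun w => g (Y w)).
Proof.
move=> hY [[M hM] [L hL]].
have := @sle_comp _ _ _ _ _ hE 1 (fun _ => Y) (fun x => g (x ord0)).
apply; first by [].
split; first by exists M => x.
by exists L => x y; rewrite big_ord1.
Qed.

Lemma H_sum {F : nat -> Om -> R} {s : seq nat} :
  (forall i, i \in s -> H (F i)) -> H (fun w => \sum_(i <- s) F i w).
Proof.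
elim: s => [|a s IH] hs.
  have -> : (fun w => \sum_(i <- [::]) F i w) = (fun _ => 0).
    by apply: funext => w; rewrite big_nil.
  exact: (sle_zero hE).
have -> : (fun w => \sum_(i <- a :: s) F i w) = (fun w => F a w + \sum_(i <- s) F i w).
  by apply: funext => w; rewrite big_cons.
apply: (sle_add hE); first by apply: hs; rewrite inE eqxx.
by apply: IH => i hi; apply: hs; rewrite inE hi orbT.
Qed.

Lemma H_scale' {c : R} {Y : Om -> R} : H Y -> H (fun w => Y w * c).
Proof.
move=> hY; have -> : (fun w => Y w * c) = (fun w => c * Y w).
  by apply: funext => w; rewrite mulrC.
exact: (sle_scale hE c hY).
Qed.

Definition clamp (B x : R) : R := if x < - B then - B else if B < x then B else x.

Lemma clamp_bnd B x : 0 <= B -> - B <= clamp B x <= B.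
Proof.
move=> hB; rewrite /clamp; case: ifP => h1; first by rewrite lexx /=; lra.
case: ifP => h2; first by rewrite lexx andbT; lra.
apply/andP; split; rewrite leNgt ?h1 ?h2 //.
Qed.

Lemma clamp_lip B x y : 0 <= B -> `|clamp B x - clamp B y| <= `|x - y|.
Proof.
move=> hB.
have n1 := ler_norm (x - y). have n2 := ler_norm (y - x).
rewrite distrC in n2.
rewrite ler_norml; apply/andP; split; rewrite /clamp;
  (case: ifP => h1; case: ifP => h2; try case: ifP => h3; try case: ifP => h4); lra.
Qed.

Lemma H_sqr {Y : Om -> R} {B : R} : 0 <= B -> H Y -> (forall w, `|Y w| <= B) ->
  H (fun w => Y w ^+ 2).
Proof.
move=> hB hY bY.
have -> : (fun w => Y w ^+ 2) = (fun w => (clamp B (Y w)) ^+ 2).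
  apply: funext => w; have := bY w; rewrite ler_norml => /andP [h1 h2].
  rewrite /clamp; case: ifP => h3; first lra.
  by case: ifP => h4 //; lra.
apply: (@H_comp1 Y (fun x => clamp B x ^+ 2)) => //.
split.
  exists (B ^+ 2) => x; have /andP [h1 h2] := clamp_bnd B x hB.
  rewrite ger0_norm ?sqr_ge0 //; nra.
exists (2 * B) => x y.
rewrite /= subr_sqr normrM mulrC.
have /andP [h1 h2] := clamp_bnd B x hB. have /andP [h3 h4] := clamp_bnd B y hB.
apply: ler_pM; rewrite ?normr_ge0 //; try exact: clamp_lip.
all: rewrite ler_norml; apply/andP; split; lra.
Qed.

End Helpers.
Unset Implicit Arguments.

Theorem lemma4p4 (R : realType) (beta : R)
    (d : measure_display) (Om : measurableType d)
    (H : set (Om -> R)) (E : (Om -> R) -> R)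
    (d' : measure_display) (Om' : measurableType d')
    (H' : set (Om' -> R)) (E' : (Om' -> R) -> R) (xi : Om' -> R)
    (alpha : R) (X : nat -> Om -> R) (f : R -> R) :
  1 <= beta ->
  is_sublinear_expectation H E -> condition_A H E ->
  is_sublinear_expectation H' E' -> condition_A H' E' ->
  G_normal H' E' xi ->
  Num.sqrt (E' (fun w => xi w ^+ 2)) = 2 * beta / (1 + beta) ->
  Num.sqrt (- E' (fun w => - xi w ^+ 2)) = 2 / (1 + beta) ->
  song_alpha beta E' xi alpha ->
  standing_setting H E beta X ->
  (forall i, (1 <= i)%N -> H (fun w => `|X i w| `^ (2 + alpha))) ->
  (exists K : R, forall i, (1 <= i)%N -> E (fun w => `|X i w| `^ (2 + alpha)) <= K) ->
  calH E' xi f ->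
  exists M5 : R, 0 < M5 /\
    forall n1 n2 : nat, (1 <= n1 <= n2)%N ->
      \sum_(n1 <= l < n2.+1) E (fun w => Zl E X f l w ^+ 2)
        <= M5 * (n2 - n1 + 1)%:R.
Proof.
move=> _ hE _ _ _ _ _ _ _ hs _ _ hf.
have hfL := hf.1.
have [[M hM] _] := hfL.
have M0 : 0 <= M by apply: le_trans (hM 0); rewrite normr_ge0.
have hX : forall i, (1 <= i)%N -> H (X i) := fun i hi => (hs.2.1 i hi).1.
have hW : forall k, H (fun w => Wn E X k w).
  move=> k.
  have -> : (fun w => Wn E X k w) = (fun w => Sn X k w * (Bn E X k)^-1) by [].
  apply: (H_scale' hE); apply: (H_sum hE) => i; rewrite mem_index_iota => /andP [hi _].
  exact: hX.
have hfW : forall k, H (fun w => f (Wn E X k w)) := fun k => H_comp1 hE (hW k) hfL.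
have bE : forall k, `|E (fun w => f (Wn E X k w))| <= M.
  move=> k; rewrite ler_norml; apply/andP; split.
    rewrite -[X in X <= _](sle_const hE); apply: (sle_mono hE) => //.
      exact: (H_const hE).
    by move=> w; have := hM (Wn E X k w); rewrite ler_norml => /andP [].
  rewrite -[X in _ <= X](sle_const hE); apply: (sle_mono hE) => //.
    exact: (H_const hE).
  by move=> w; have := hM (Wn E X k w); rewrite ler_norml => /andP [].
have hxi : forall k, H (fun w => xik E X f k w).
  move=> k; exact: (sle_add hE (hfW k) (H_const hE _)).
have bxi : forall k w, `|xik E X f k w| <= M + M.
  move=> k w; rewrite /xik; apply: le_trans (ler_normB _ _) _.
  by apply: lerD; [exact: hM | exact: bE].
have hZ : forall l, H (fun w => Zl E X f l w).
  move=> l; apply: (H_sum hE (F := fun i w => xik E X f i w / i%:R)) => i _.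
  exact: (H_scale' hE).
have bZ : forall l w, (1 <= l)%N -> `|Zl E X f l w| <= 8 * M.
  move=> [//|l] w _; rewrite /Zl /=.
  apply: le_trans (ler_norm_sum _ _ _) _.
  have a0 : (0 < 4 ^ l)%N by rewrite expn_gt0.
  have a0R : 0 < (4 ^ l)%:R :> R by rewrite ltr0n.
  apply: (@le_trans _ _ (\sum_(4 ^ l <= i < 4 ^ l.+1) ((M + M) / (4 ^ l)%:R))).
    apply: ler_sum_nat => i /andP [hi1 hi2].
    have i0 : (0 < i)%N by apply: leq_trans hi1.
    rewrite normrM normfV normr_nat; apply: ler_pM; rewrite ?normr_ge0 ?invr_ge0 ?ler0n //.
    by rewrite lef_pV2 ?posrE ?ltr0n // ler_nat.
  have hn : ((4 ^ l.+1 - 4 ^ l)%:R <= 4 * (4 ^ l)%:R :> R).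
    by rewrite -natrM ler_nat expnS leq_subr.
  have hy : ((4 ^ l)%:R : R)^-1 * (4 ^ l)%:R = 1 by rewrite mulVf // gt_eqF.
  have y0 : 0 <= ((4 ^ l)%:R : R)^-1 by rewrite invr_ge0 ler0n.
  move: hn hy y0; set a := ((4 ^ l)%:R : R); set y := a^-1.
  rewrite sumr_const_nat -mulr_natr; set n := (_ - _)%:R => hn hy y0.
  have hMy : M * y * a = M by rewrite -mulrA hy mulr1.
  have hMy0 : 0 <= M * y by rewrite mulr_ge0.
  nra.
exists (64 * M ^+ 2 + 1); split; first nra.
move=> n1 n2 /andP [h1 h2].
apply: (@le_trans _ _ (\sum_(n1 <= l < n2.+1) (64 * M ^+ 2 + 1))).
  apply: ler_sum_nat => l /andP [hl _].
  have hl1 : (1 <= l)%N by apply: leq_trans hl.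
  rewrite -[X in _ <= X](sle_const hE); apply: (sle_mono hE).
  - apply: (H_sqr hE (B := 8 * M)) => //; first by rewrite mulr_ge0.
    by move=> w; exact: bZ.
  - exact: (H_const hE).
  move=> w; have := bZ l w hl1; rewrite ler_norml => /andP [u v]; nra.
by rewrite sumr_const_nat subSn // addn1 (mulr_natr (64 * M ^+ 2 + 1) (n2 - n1).+1).
Qed.
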